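(* Let $D$ be a division ring with center $F$. Then either $D$ has a maximal subring, or no element $\alpha\in D\setminus F$ is algebraic over $F$.
   Context: All rings are associative unital and subrings share the identity. A maximal subring of a ring $T$ is a proper subring maximal under inclusion among proper subrings of $T$. *)

(* Defs.v *)
From HB Require Import structures.
From mathcomp Require Import all_boot all_order all_algebra.
Set Implicit Arguments. Unset Strict Implicit. Unset Printing Implicit Defensive.
Import GRing.Theory.
Local Open Scope ring_scope.

Definition is_division_ring (D : unitRingType) : Prop :=
  forall x : D, x != 0 -> x \is a GRing.unit.

Definition central (R : nzRingType) (x : R) : Prop := forall y : R, x * y = y * x.

Definition is_subring (R : nzRingType) (S : R -> Prop) : Prop :=
  [/\ S 1,
      (forall x y, S x -> S y -> S (x - y)) &
      (forall x y, S x -> S y -> S (x * y))].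

Definition proper_subset (R : Type) (S : R -> Prop) : Prop := exists x, ~ S x.

Definition is_maximal_subring (R : nzRingType) (S : R -> Prop) : Prop :=
  [/\ is_subring S, proper_subset S &
      forall T : R -> Prop, is_subring T -> proper_subset T ->
        (forall x, S x -> T x) -> forall x, T x -> S x].

Definition algebraic_over_center (R : nzRingType) (a : R) : Prop :=
  exists p : {poly R}, [/\ p != 0, (forall i, central p`_i) & p.[a] = 0].

(* Main.v *)
Require Import Defs.
From HB Require Import structures.
From mathcomp Require Import all_boot all_order all_algebra.
From mathcomp Require boolp classical_sets.
From Stdlib Require Import Classical.
Set Implicit Arguments. Unset Strict Implicit. Unset Printing Implicit Defensive.
Import GRing.Theory.
Local Open Scope ring_scope.

Lemma solve_sys (D : unitRingType) (hD : is_division_ring D) (n : nat) :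
  forall m (a : nat -> nat -> D), (n < m)%N ->
  exists c : nat -> D, (exists j, (j < m)%N /\ c j != 0) /\
    forall i, (i < n)%N -> \sum_(j < m) a i j * c j = 0.
Proof.
elim: n => [|n IH] m a hm.
  exists (fun _ => 1); split; last by [].
  by exists 0%N; split => //; apply: oner_neq0.
case: (classic (exists j0, (j0 < m)%N /\ a n j0 != 0)); last first.
  move=> H0.
  have [c [hc1 hc2]] := IH m a (ltnW hm).
  exists c; split => // i; rewrite ltnS leq_eqVlt => /orP [/eqP ->|]; last exact: hc2.
  apply: big1 => j _; case: (eqVneq (a n j) 0) => [->|hne]; first by rewrite mul0r.
  by exfalso; apply: H0; exists j.
move=> [j0 [hj0m hj0]].
destruct m as [|m']; first by [].
have hnm : (n < m')%N by [].
set u := (a n j0)^-1.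
pose b i k := a i (bump j0 k) - a i j0 * u * a n (bump j0 k).
have [d [[k0 [hk0 hdk0]] hd]] := IH m' b hnm.
pose S i := \sum_(k < m') a i (bump j0 k) * d k.
exists (fun j => if j == j0 then - u * S n else d (unbump j0 j)).
have cb : forall k, (if bump j0 k == j0 then - u * S n else d (unbump j0 (bump j0 k))) = d k.
  by move=> k; rewrite eq_sym (negbTE (neq_bump _ _)) bumpK.
split.
  exists (bump j0 k0); split; last by rewrite cb.
  by rewrite /bump; case: (j0 <= k0)%N; rewrite /= ?add1n ?add0n // ltnW.
move=> i hi.
rewrite (bigD1_ord (Ordinal hj0m)) //=.
under eq_bigr do rewrite cb.
rewrite eqxx -/(S i).
have uu : a n j0 * u = 1 by rewrite /u mulrV //; apply: hD.
move: hi; rewrite ltnS leq_eqVlt => /orP [/eqP ->|hi].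
  by rewrite mulrA mulrN uu mulN1r addNr.
have := hd i hi.
rewrite /b.
under eq_bigr do rewrite mulrBl.
rewrite sumrB -/(S i).
rewrite /S.
under [X in _ - X]eq_bigr do rewrite -!mulrA.
rewrite -!mulr_sumr.
move=> /eqP; rewrite subr_eq0 => /eqP ->.
by rewrite mulNr mulrN mulrA addNr.
Qed.

Lemma dep_lemma (D : unitRingType) (hD : is_division_ring D) (al : D)
  (p : {poly D}) (hp : p != 0) (hc : forall i, central p`_i) (hr : p.[al] = 0)
  (hal : al != 0) :
  forall m (x : nat -> D), ((size p).-1 < m)%N ->
  exists c : nat -> D, (exists j, (j < m)%N /\ c j != 0) /\
    (forall j, c j * al = al * c j) /\ \sum_(j < m) x j * c j = 0.
Proof.
move=> m x hm.
set d := (size p).-1 in hm.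
have hd0 : (0 < d)%N.
  rewrite /d; case: (ltnP 1 (size p)) => [h|h]; first by rewrite -subn1 subn_gt0.
  exfalso; move: hr; rewrite [p]size1_polyC // hornerC => hp0.
  by move: hp; rewrite [p]size1_polyC // hp0 polyC0 eqxx.
pose E (c : nat -> D) := forall i, (i < d)%N -> \sum_(j < m) x j * al ^+ i * c j = 0.
have lcu : p`_d \is a GRing.unit.
  apply: hD; rewrite /d -lead_coefE lead_coef_eq0 //.
have rowd : forall c, E c -> \sum_(j < m) x j * al ^+ d * c j = 0.
  move=> c hE.
  have h0 : \sum_(j < m) x j * p.[al] * c j = 0 by rewrite hr; apply: big1 => j _; rewrite mulr0 mul0r.
  have e1 : \sum_(j < m) x j * p.[al] * c j =
       \sum_(i < size p) p`_i * \sum_(j < m) x j * al ^+ i * c j.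
    under [RHS]eq_bigr do rewrite mulr_sumr.
    rewrite [RHS]exchange_big /=; apply: eq_bigr => j _.
    rewrite horner_coef mulr_sumr mulr_suml; apply: eq_bigr => i _.
    by rewrite !mulrA hc.
  have hs : size p = d.+1 by move: hd0; rewrite /d; case: (size p).
  move: h0; rewrite e1 hs big_ord_recr /= big1 ?add0r; last first.
    by move=> i _; rewrite hE // mulr0.
  by move=> h; rewrite -(mulKr lcu (\sum_(j < m) _)) h mulr0.
have main : forall k c, E c -> (exists j, (j < m)%N /\ c j != 0) ->
    (#|[pred j : 'I_m | (c j != 0)%R]| <= k)%N ->
    exists c : nat -> D, (exists j, (j < m)%N /\ c j != 0) /\
    (forall j, c j * al = al * c j) /\ \sum_(j < m) x j * c j = 0.
  elim=> [|k IH] c hE [j0 [hj0m hj0]] hcard.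
    have : (0 < #|[pred j : 'I_m | (c j != 0)%R]|)%N.
      by apply/card_gt0P; exists (Ordinal hj0m); rewrite inE.
    by rewrite lt0n -leqn0 hcard.
  set v := (c j0)^-1.
  have hv : c j0 * v = 1 by rewrite /v mulrV //; apply: hD.
  pose c1 j := c j * v.
  pose c2 j := al * c1 j * al^-1 - c1 j.
  have hE1 : E c1.
    move=> i hi; have : \sum_(j < m) x j * al ^+ i * c1 j = (\sum_(j < m) x j * al ^+ i * c j) * v.
      by rewrite mulr_suml; apply: eq_bigr => j _; rewrite mulrA.
    by move=> ->; rewrite hE // mul0r.
  have hE2 : E c2.
    move=> i hi; have : \sum_(j < m) x j * al ^+ i * c2 j =
        (\sum_(j < m) x j * al ^+ i.+1 * c1 j) * al^-1 - \sum_(j < m) x j * al ^+ i * c1 j.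
      rewrite mulr_suml -sumrB; apply: eq_bigr => j _.
      by rewrite /c2 mulrBr exprSr !mulrA.
    move=> ->; rewrite (hE1 i hi) subr0.
    move: hi; rewrite leq_eqVlt => /orP [/eqP ->|hi]; first by rewrite rowd // mul0r.
    by rewrite (hE1 _ hi) mul0r.
  have sub1 : [pred j : 'I_m | c1 j != 0] \subset [pred j : 'I_m | c j != 0].
    apply/subsetP => j; rewrite !inE; apply: contra => /eqP h; by rewrite /c1 h mul0r.
  case: (classic (exists j, (j < m)%N /\ c2 j != 0)) => [h2|h2].
    apply: (IH c2 hE2 h2).
    rewrite -ltnS; apply: leq_trans hcard; apply: (@leq_trans #|[pred j : 'I_m | (c1 j != 0)%R]|); last first.
      exact: subset_leq_card.
    apply: proper_card; apply/properP; split.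
      apply/subsetP => j; rewrite !inE; apply: contra => /eqP h; by rewrite /c2 h mulr0 mul0r subr0.
    exists (Ordinal hj0m); rewrite !inE /c2 /c1 /= hv ?mulr1 ?oner_neq0 //.
    by rewrite mulrV ?subrr ?eqxx //; apply: hD.
  have hc2 : forall j, (j < m)%N -> c2 j = 0.
    move=> j hj; case: (eqVneq (c2 j) 0) => // hne; exfalso; apply: h2; exists j; split => //.
  exists (fun j => if (j < m)%N then c1 j else 0); split.
    by exists j0; rewrite hj0m /c1 hv oner_neq0.
  split.
    move=> j; case: ifP => hj; last by rewrite mul0r mulr0.
    have := hc2 j hj; rewrite /c2 => /eqP; rewrite subr_eq0 => /eqP h.
    by rewrite -{1}h divrK //; apply: hD.
  have := hE1 0%N hd0; rewrite expr0.
  by move=> h; rewrite -[RHS]h; apply: eq_bigr => j _; rewrite ltn_ord mulr1.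
have [c [hc1 hc2]] := solve_sys hD (fun i j => x j * al ^+ i) hm.
exact: (main _ c hc2 hc1 (leqnn _)).
Qed.

Lemma cmM (D : unitRingType) (al a b : D) :
  a * al = al * a -> b * al = al * b -> (a * b) * al = al * (a * b).
Proof. by move=> ha hb; rewrite -mulrA hb mulrA ha mulrA. Qed.

Lemma cmN (D : unitRingType) (al a : D) : a * al = al * a -> (- a) * al = al * (- a).
Proof. by move=> ha; rewrite mulNr mulrN ha. Qed.

Lemma cmV (D : unitRingType) (al a : D) : a \is a GRing.unit ->
  a * al = al * a -> a^-1 * al = al * a^-1.
Proof.
move=> ua ha; have := congr1 (fun t => a^-1 * t * a^-1) ha => /=.
by rewrite mulKr // mulrA mulrK // => ->.
Qed.

Lemma fingen (D : unitRingType) (hD : is_division_ring D) (al : D) (d : nat)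
  (hdep : forall m (x : nat -> D), (d < m)%N ->
     exists c : nat -> D, (exists j, (j < m)%N /\ c j != 0) /\
     (forall j, c j * al = al * c j) /\ \sum_(j < m) x j * c j = 0) :
  exists r (y : nat -> D), forall z, exists c : nat -> D,
    (forall k, c k * al = al * c k) /\ z = \sum_(k < r) y k * c k.
Proof.
pose Indep r (y : nat -> D) := forall c : nat -> D, (forall k, c k * al = al * c k) ->
  \sum_(k < r) y k * c k = 0 -> forall k, (k < r)%N -> c k = 0.
have bound : forall r y, Indep r y -> (r <= d)%N.
  move=> r y hy; rewrite leqNgt; apply/negP => hr.
  have [c [[j [hj hcj]] [hc hs]]] := hdep r y hr.
  by move/eqP: hcj; apply; apply: (hy c hc hs j hj).
pose Q r := exists y, Indep r y.
have [r [[y hy] hn]] : exists r, Q r /\ ~ Q r.+1.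
  apply: NNPP => H.
  have allQ : forall r, Q r.
    elim=> [|r IH]; first by exists (fun _ => 0) => c _ _ k.
    by apply: NNPP => hq; apply: H; exists r.
  have [y hy] := allQ d.+1.
  by have := bound _ _ hy; rewrite ltnn.
exists r, y => z.
apply: NNPP => Hz; apply: hn.
exists (fun k => if k == r then z else y k) => c hc hs.
have hsplit : \sum_(k < r.+1) (if (k : nat) == r then z else y k) * c k =
    \sum_(k < r) y k * c k + z * c r.
  rewrite big_ord_recr /= eqxx; congr (_ + _); apply: eq_bigr => k _.
  by rewrite /= (ltn_eqF (ltn_ord k)).
rewrite hsplit in hs.
have hcr : c r = 0.
  case: (eqVneq (c r) 0) => // hne; exfalso; apply: Hz.
  have ucr : c r \is a GRing.unit by apply: hD.
  exists (fun k => - c k * (c r)^-1); split.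
    by move=> k; apply: cmM; [apply: cmN | apply: cmV].
  move/eqP: hs; rewrite addrC addr_eq0 => /eqP h.
  rewrite -(mulrK ucr z) h mulNr mulr_suml -sumrN; apply: eq_bigr => k _.
  by rewrite mulNr mulrN mulrA.
rewrite hcr mulr0 addr0 in hs.
move=> k; rewrite ltnS leq_eqVlt => /orP [/eqP ->|hk] //.
exact: hy c hc hs k hk.
Qed.

Lemma sub0 (D : nzRingType) (S : D -> Prop) : is_subring S -> S 0.
Proof. by case=> h1 hB _; rewrite -(subrr (1 : D)); apply: hB. Qed.

Lemma subD (D : nzRingType) (S : D -> Prop) x y : is_subring S -> S x -> S y -> S (x + y).
Proof.
move=> hS hx hy; have [_ hB _] := hS.
by rewrite -[y]opprK -[- y]sub0r; apply: (hB) => //; apply: (hB) => //; apply: sub0.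
Qed.

Lemma subsum (D : nzRingType) (S : D -> Prop) r (f : 'I_r -> D) : is_subring S ->
  (forall k, S (f k)) -> S (\sum_(k < r) f k).
Proof.
move=> hS hf; apply: (big_ind S); [exact: sub0 | | by []].
by move=> a b ha hb; apply: subD.
Qed.

Theorem main_thm (D : unitRingType) (hD : is_division_ring D) :
  (exists S : D -> Prop, is_maximal_subring S) \/
  (forall a : D, ~ central a -> ~ algebraic_over_center a).
Proof.
have [Hex|H] := classic (exists a : D, ~ central a /\ algebraic_over_center a); last first.
  by right => a h1 h2; apply: H; exists a.
move: Hex => [al [hnc [p [hp hc hr]]]]; left.
have hal : al != 0.
  by apply/eqP => h0; apply: hnc => y; rewrite h0 mul0r mulr0.
have [r [y hy]] := fingen hD (dep_lemma hD hp hc hr hal).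
pose Cm (z : D) := z * al = al * z.
have CmS : is_subring Cm.
  split; first by rewrite /Cm mul1r mulr1.
    by move=> a b ha hb; rewrite /Cm mulrBl mulrBr ha hb.
  by move=> a b ha hb; apply: cmM.
have Cmp : proper_subset Cm.
  move: hnc => /not_all_ex_not [z hz]; exists z => h; apply: hz; by rewrite /Cm in h.
have Full : forall S : D -> Prop, is_subring S -> (forall z, Cm z -> S z) ->
    (forall k, (k < r)%N -> S (y k)) -> forall z, S z.
  move=> S hS hC hY z; have [c [hc' ->]] := hy z.
  apply: subsum => // k; have [_ _ hM] := hS; apply: hM; [exact: hY | exact: hC].
pose Good (S : D -> Prop) := [/\ is_subring S, proper_subset S & forall z, Cm z -> S z].
pose T := {S : D -> Prop | Good S}.
have t0G : Good Cm by split.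
pose t0 : T := exist _ Cm t0G.
pose R : rel T := fun s t => boolp.asbool (forall z, sval s z -> sval t z).
have Rrefl : forall t, R t t by move=> t; apply/boolp.asboolP.
have Rtrans : forall a b c, R a b -> R b c -> R a c.
  move=> a b c /boolp.asboolP hab /boolp.asboolP hbc; apply/boolp.asboolP => z hz.
  by apply: hbc; apply: hab.
have Rchain : forall A : T -> Prop, classical_sets.total_on A R ->
    exists t, forall s, A s -> R s t.
  move=> A hA.
  have [[s0 hs0]|hne] := classic (exists s0, A s0); last first.
    by exists t0 => s hs; exfalso; apply: hne; exists s.
  pose U (z : D) := Cm z \/ exists s, A s /\ sval s z.
  have incl : forall s s', A s -> A s' -> (forall z, sval s z -> sval s' z) \/
       (forall z, sval s' z -> sval s z).
    move=> s s' hs hs'; case: (hA s s' hs hs') => /boolp.asboolP h; [left|right]; exact: h.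
  have sC : forall (s : T) z, Cm z -> sval s z.
    by move=> s z hz; have := proj2_sig s; rewrite /Good => -[_ _ hSc]; apply: hSc.
  have pair : forall a b, U a -> U b -> exists s, A s /\ sval s a /\ sval s b.
    move=> a b [ha|[s [hs ha]]] [hb|[s' [hs' hb]]].
    - by exists s0; split => //; split; apply: sC.
    - by exists s'; split => //; split => //; apply: sC.
    - by exists s; split => //; split => //; apply: sC.
    - case: (incl s s' hs hs') => h.
        by exists s'; split => //; split => //; apply: h.
      by exists s; split => //; split => //; apply: h.
  have sS : forall s : T, is_subring (sval s).
    by move=> s; have := proj2_sig s; rewrite /Good => -[].
  have UG : Good U.
    split.
    - split; first by left; rewrite /Cm mul1r mulr1.
        move=> a b ha hb; have [s [hs [hsa hsb]]] := pair a b ha hb.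
        by right; exists s; split => //; have [_ hB _] := sS s; apply: hB.
      move=> a b ha hb; have [s [hs [hsa hsb]]] := pair a b ha hb.
      by right; exists s; split => //; have [_ _ hM] := sS s; apply: hM.
    - apply: NNPP => hnp.
      have allU : forall z, U z by move=> z; apply: NNPP => hz; apply: hnp; exists z.
      have : forall r', exists s, A s /\ forall k, (k < r')%N -> sval s (y k).
        elim=> [|r' [s [hs hk]]]; first by exists s0.
        case: (allU (y r')) => [hc'|[s' [hs' hy']]].
          exists s; split => // k; rewrite ltnS leq_eqVlt => /orP [/eqP ->|]; last exact: hk.
          exact: sC.
        case: (incl s s' hs hs') => h.
          exists s'; split => // k; rewrite ltnS leq_eqVlt => /orP [/eqP ->|] // hk'.
          by apply: h; apply: hk.
        exists s; split => // k; rewrite ltnS leq_eqVlt => /orP [/eqP ->|]; last exact: hk.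
        by apply: h.
      move=> /(_ r) [s [hs hk]].
      have := proj2_sig s; rewrite /Good => -[hSs [w hw] hSc].
      by apply: hw; apply: Full.
    - by move=> z hz; left.
  exists (exist _ U UG) => s hs; apply/boolp.asboolP => z hz /=.
  by right; exists s.
have [t ht] := classical_sets.ZL_preorder t0 Rrefl Rtrans Rchain.
case: t ht => M [hMs hMp hMc] ht.
exists M; split => // T' hT' hT'p hMT z hz.
have gT : Good T' by split => // w hw; apply: hMT; apply: (hMc).
have := ht (exist _ T' gT).
have hR : R (exist _ M (And3 hMs hMp hMc)) (exist _ T' gT) by apply/boolp.asboolP.
by move=> /(_ hR) /boolp.asboolP /=; apply.
Qed.

Theorem corollary2p10 (D : unitRingType) (hD : is_division_ring D) :
  (exists S : D -> Prop, is_maximal_subring S) \/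
  (forall a : D, ~ central a -> ~ algebraic_over_center a).
Proof. exact: main_thm. Qed.
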